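(* Let $R$ be a commutative Noetherian ring with unity such that $\Gamma_E(R)$ has at least three vertices. If a vertex $[y]$ of $\Gamma_E(R)$ is adjacent to a leaf, then $\operatorname{ann}(y)$ is a maximal element of $\mathfrak F=\{\operatorname{ann}(z)\mid 0\neq z\in R\}$ and is an associated prime of $R$.
   Context: For $x,y\in R$ write $x\sim y$ iff $\operatorname{ann}(x)=\operatorname{ann}(y)$; $[x]$ denotes the equivalence class of $x$. Let $Z^*(R)$ be the set of nonzero zero divisors of $R$. The graph $\Gamma_E(R)$ is the simple graph whose vertices are the classes $[x]$ with $x\in Z^*(R)$, two distinct vertices $[x],[y]$ being adjacent iff $xy=0$. A leaf is a vertex of degree $1$. An associated prime of $R$ is a prime ideal of the form $\operatorname{ann}(y)$, $y\in R$. *)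

(* Defs.v *)
From mathcomp Require Import all_boot all_algebra.
Set Implicit Arguments. Unset Strict Implicit. Unset Printing Implicit Defensive.
Import GRing.Theory.
Local Open Scope ring_scope.

Section Defs.
Variable R : comNzRingType.

Definition is_ideal (I : R -> Prop) : Prop :=
  I 0 /\ (forall a b, I a -> I b -> I (a + b)) /\ (forall r a, I a -> I (r * a)).

Definition noetherian : Prop :=
  forall I : nat -> R -> Prop,
    (forall n, is_ideal (I n)) ->
    (forall n x, I n x -> I n.+1 x) ->
    exists N, forall n, (N <= n)%N -> forall x, I n x <-> I N x.

Definition ann (x : R) : R -> Prop := fun r => r * x = 0.

Definition same_ann (x y : R) : Prop := forall r, ann x r <-> ann y r.

Definition nz_zero_divisor (x : R) : Prop := x <> 0 /\ exists y, y <> 0 /\ x * y = 0.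

(* Adjacency of the (distinct) vertices [x], [y] of Gamma_E(R). *)
Definition adjE (x y : R) : Prop :=
  nz_zero_divisor x /\ nz_zero_divisor y /\ ~ same_ann x y /\ x * y = 0.

Definition atleast3_vertices : Prop :=
  exists x1 x2 x3, nz_zero_divisor x1 /\ nz_zero_divisor x2 /\ nz_zero_divisor x3 /\
    ~ same_ann x1 x2 /\ ~ same_ann x1 x3 /\ ~ same_ann x2 x3.

Definition leafE (x : R) : Prop :=
  nz_zero_divisor x /\
  exists w, adjE x w /\ forall w', adjE x w' -> same_ann w' w.

Definition subpred (P Q : R -> Prop) : Prop := forall r, P r -> Q r.

Definition maximal_in_annF (P : R -> Prop) : Prop :=
  (exists z, z <> 0 /\ forall r, P r <-> ann z r) /\
  forall z, z <> 0 -> subpred P (ann z) -> subpred (ann z) P.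

Definition prime_ideal (P : R -> Prop) : Prop :=
  is_ideal P /\ ~ P 1 /\ forall a b, P (a * b) -> P a \/ P b.

Definition associated_prime (P : R -> Prop) : Prop :=
  prime_ideal P /\ exists w, forall r, P r <-> ann w r.

End Defs.

(* Main.v *)
Require Import Defs.
From mathcomp Require Import all_boot all_algebra.
From Stdlib Require Import Classical.
Local Open Scope ring_scope.
Import GRing.Theory.

Section S.
Variable R : comNzRingType.

Lemma K (x y : R) : leafE x -> adjE x y -> forall w, w <> 0 -> w * x = 0 ->
  same_ann w x \/ same_ann w y.
Proof.
move=> [nzx [w0 [adj0 H]]] axy w w0n wx.
destruct (classic (same_ann x w)) as [E|E].
  by left => r; rewrite (E r).
right.
have aw : adjE x w.
  split; first exact nzx.
  split; first by split => //; exists x; split => //; case: nzx.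
  by split => //; rewrite mulrC.
have h1 := H w aw. have h2 := H y axy.
by move=> r; rewrite (h1 r) (h2 r).
Qed.

Lemma notsub (x y : R) : atleast3_vertices R -> leafE x -> adjE x y ->
  ~ Defs.subpred (ann y) (ann x).
Proof.
move=> [x1 [x2 [x3 [n1 [n2 [n3 [d12 [d13 d23]]]]]]]] lx axy sub.
have Kx := K x y lx axy.
have nzx : x <> 0 by case: lx => [[]].
have xx : x * x = 0.
  apply: sub; rewrite /ann; case: axy => _ [_ [_ ->]] //.
have bad : forall v, v <> 0 -> v * x = 0 \/ v * y = 0 ->
   same_ann v x \/ same_ann v y.
  move=> v vn [h|h]; first exact: Kx.
  by apply: Kx => //; apply: sub.
have good : forall v, nz_zero_divisor v -> ~ same_ann v x -> ~ same_ann v y -> False.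
  move=> v [vn [u [un vu]]] nx ny.
  have contra : forall w, w <> 0 -> w * x = 0 -> v * w = 0 -> False.
    move=> w wn wx vw.
    have [e|e] := Kx w wn wx.
    - have : v * x = 0 by apply/(e v).
      by move=> h; case: (bad v vn (or_introl h)).
    - have : v * y = 0 by apply/(e v).
      by move=> h; case: (bad v vn (or_intror h)).
  destruct (classic (u * x = 0)) as [ux|ux].
    exact: (contra u un ux vu).
  apply: (contra (u * x) ux).
    by rewrite -mulrA xx mulr0.
  by rewrite mulrA vu mul0r.
have sym : forall a b : R, same_ann a b -> same_ann b a by move=> a b e r; rewrite (e r).
have tr : forall a b c : R, same_ann a b -> same_ann b c -> same_ann a c
  by move=> a b c e f r; rewrite (e r) (f r).
have cl : forall v, nz_zero_divisor v -> same_ann v x \/ same_ann v y.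
  move=> v nv.
  destruct (classic (same_ann v x)) as [a|a]; first by left.
  destruct (classic (same_ann v y)) as [b|b]; first by right.
  by case: (good v nv a b).
have [a1|a1] := cl x1 n1; have [a2|a2] := cl x2 n2; have [a3|a3] := cl x3 n3.
- by apply: d12; apply: tr a1 (sym _ _ a2).
- by apply: d12; apply: tr a1 (sym _ _ a2).
- by apply: d13; apply: tr a1 (sym _ _ a3).
- by apply: d23; apply: tr a2 (sym _ _ a3).
- by apply: d23; apply: tr a2 (sym _ _ a3).
- by apply: d13; apply: tr a1 (sym _ _ a3).
- by apply: d12; apply: tr a1 (sym _ _ a2).
- by apply: d12; apply: tr a1 (sym _ _ a2).
Qed.

Lemma maxl (x y : R) : atleast3_vertices R -> leafE x -> adjE x y ->
  forall z, z <> 0 -> Defs.subpred (ann y) (ann z) -> Defs.subpred (ann z) (ann y).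
Proof.
move=> h3 lx axy z zn sub.
have zx : z * x = 0 by rewrite mulrC; apply: sub; rewrite /ann; case: axy => _ [_ [_ ->]].
have [e|e] := K x y lx axy z zn zx.
  by exfalso; apply: (notsub x y h3 lx axy) => r hr; apply/(e r); apply: sub.
by move=> r hr; apply/(e r).
Qed.
End S.

Theorem corollary3p3 (R : comNzRingType) :
  noetherian R -> atleast3_vertices R ->
  forall x y : R, leafE x -> adjE x y ->
    maximal_in_annF (ann y) /\ associated_prime (ann y).
Proof.
move=> _ h3 x y lx axy.
have yn : y <> 0 by case: axy => _ [[]].
have M := maxl R x y h3 lx axy.
split.
  by split => //; exists y.
split; last by exists y.
split.
  split; first by rewrite /ann mul0r.
  split; first by move=> a b; rewrite /ann mulrDl => -> ->; rewrite addr0.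
  by move=> r a; rewrite /ann -mulrA => ->; rewrite mulr0.
split; first by rewrite /ann mul1r.
move=> a b hab.
destruct (classic (a * y = 0)) as [h|h]; first by left.
right.
have : Defs.subpred (ann (a * y)) (ann y).
  apply: M => // r; rewrite /ann => hr; by rewrite mulrA mulrAC hr mul0r.
apply; rewrite /ann; move: hab; rewrite /ann => hab.
by rewrite mulrA [b * a]mulrC hab.
Qed.
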